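(* Over $\mathrm{IKP}$, the following are equivalent: (i) $\mathrm{PlUb}$ together with the axiom of Exponentiation; (ii) every set has a powerset.
   Context: $\mathrm{IKP}$ is intuitionistic Kripke–Platek set theory (with strong infinity). Exponentiation asserts that for all sets $a,b$ the set $b^a$ of all functions from $a$ to $b$ exists. An ordinal is a transitive set of transitive sets. For sets $\alpha,\gamma$, $\mathrm{relpl}_\alpha(\gamma)$ denotes $\forall \delta \in \gamma\ \forall \varepsilon \in \alpha\,(\varepsilon \subseteq \delta \rightarrow \varepsilon \in \gamma)$. $\mathrm{PlOrd}$ is the class of ordinals $\alpha$ such that for all $\beta \in \alpha$ and all $\gamma \subseteq \beta$ with $\mathrm{relpl}_\alpha(\gamma)$, we have $\gamma \in \alpha$ and $\forall \delta \in \alpha\,(\beta \in \delta \rightarrow \gamma \in \delta)$. $\mathrm{PlUb}$ is the axiom $\forall \alpha \in \mathrm{PlOrd}\ \exists \beta \in \mathrm{PlOrd}\ \alpha \in \beta$. *)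

(* Defs.v *)
(* Semantic (shallow-with-deep-schemas) rendering of IKP:
   a model is a type M with a membership relation, interpreted in Rocq's
   (intuitionistic) Prop; the axiom schemas of IKP range over a deep
   embedding of first-order formulas of the language {∈, =}. *)
From Stdlib Require Import Arith.
Set Implicit Arguments.

(* First-order formulas with de Bruijn variables. *)
Inductive form : Type :=
| FIn  : nat -> nat -> form
| FEq  : nat -> nat -> form
| FBot : form
| FAnd : form -> form -> form
| FOr  : form -> form -> form
| FImp : form -> form -> form
| FAll : form -> form                (* binds v_0 *)
| FEx  : form -> form.

Inductive Delta0 : form -> Prop :=
| D0In  : forall i j, Delta0 (FIn i j)
| D0Eq  : forall i j, Delta0 (FEq i j)
| D0Bot : Delta0 FBot
| D0And : forall p q, Delta0 p -> Delta0 q -> Delta0 (FAnd p q)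
| D0Or  : forall p q, Delta0 p -> Delta0 q -> Delta0 (FOr p q)
| D0Imp : forall p q, Delta0 p -> Delta0 q -> Delta0 (FImp p q)
| D0BAll : forall k p, k <> 0 -> Delta0 p -> Delta0 (FAll (FImp (FIn 0 k) p))
| D0BEx  : forall k p, k <> 0 -> Delta0 p -> Delta0 (FEx (FAnd (FIn 0 k) p)).

Definition scons {M : Type} (x : M) (e : nat -> M) : nat -> M :=
  fun n => match n with 0 => x | S n' => e n' end.

Fixpoint sat {M : Type} (mem : M -> M -> Prop) (e : nat -> M) (f : form) : Prop :=
  match f with
  | FIn i j => mem (e i) (e j)
  | FEq i j => e i = e j
  | FBot => False
  | FAnd p q => sat mem e p /\ sat mem e q
  | FOr p q => sat mem e p \/ sat mem e q
  | FImp p q => sat mem e p -> sat mem e q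
  | FAll p => forall x, sat mem (scons x e) p
  | FEx p => exists x, sat mem (scons x e) p
  end.

Section SetTheory.
Variables (M : Type) (mem : M -> M -> Prop).

Definition subset (a b : M) : Prop := forall z, mem z a -> mem z b.
Definition is_empty (a : M) : Prop := forall z, ~ mem z a.
Definition is_upair (x y u : M) : Prop := forall z, mem z u <-> (z = x \/ z = y).
Definition is_succ (x s : M) : Prop := forall z, mem z s <-> (mem z x \/ z = x).
Definition inductive (a : M) : Prop :=
  (exists e, is_empty e /\ mem e a) /\
  (forall y, mem y a -> exists s, is_succ y s /\ mem s a).

Record IKP : Prop := {
  ikp_ext : forall a b, (forall z, mem z a <-> mem z b) -> a = b;
  ikp_pair : forall x y, exists u, is_upair x y u;
  ikp_union : forall a, exists u, forall z, mem z u <-> exists y, mem y a /\ mem z y;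
  ikp_strong_inf : exists w, inductive w /\ forall b, inductive b -> subset w b;
  ikp_sep : forall phi, Delta0 phi -> forall (e : nat -> M) a,
      exists b, forall x, mem x b <-> (mem x a /\ sat mem (scons x e) phi);
  ikp_coll : forall phi, Delta0 phi -> forall (e : nat -> M) a,
      (forall x, mem x a -> exists y, sat mem (scons y (scons x e)) phi) ->
      exists b, forall x, mem x a -> exists y, mem y b /\ sat mem (scons y (scons x e)) phi;
  ikp_ind : forall phi (e : nat -> M),
      (forall a, (forall x, mem x a -> sat mem (scons x e) phi) -> sat mem (scons a e) phi) ->
      forall a, sat mem (scons a e) phi
}.

Definition transitive (a : M) : Prop := forall y, mem y a -> subset y a.
Definition is_ordinal (a : M) : Prop := transitive a /\ forall y, mem y a -> transitive y.

Definition relpl (alpha gamma : M) : Prop :=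
  forall delta, mem delta gamma -> forall eps, mem eps alpha ->
    subset eps delta -> mem eps gamma.

Definition PlOrd (alpha : M) : Prop :=
  is_ordinal alpha /\
  forall beta, mem beta alpha -> forall gamma, subset gamma beta -> relpl alpha gamma ->
    mem gamma alpha /\ (forall delta, mem delta alpha -> mem beta delta -> mem gamma delta).

Definition PlUb : Prop := forall alpha, PlOrd alpha -> exists beta, PlOrd beta /\ mem alpha beta.

(* Kuratowski ordered pair p = {{x},{x,y}} *)
Definition is_opair (x y p : M) : Prop :=
  exists u v, is_upair x x u /\ is_upair x y v /\ is_upair u v p.

Definition is_function (f a b : M) : Prop :=
  (forall p, mem p f -> exists x y, mem x a /\ mem y b /\ is_opair x y p) /\
  (forall x, mem x a -> exists y p, mem p f /\ is_opair x y p) /\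
  (forall x y y' p p', mem p f -> mem p' f -> is_opair x y p -> is_opair x y' p' -> y = y').

Definition Exponentiation : Prop :=
  forall a b, exists c, forall f, mem f c <-> is_function f a b.

Definition Powerset : Prop :=
  forall a, exists c, forall x, mem x c <-> subset x a.

End SetTheory.

(* Main.v *)
Require Import Defs.

Definition upair0 {M : Type} (mem : M -> M -> Prop) (x y u : M) : Prop :=
  mem x u /\ (mem y u /\ (forall z, mem z u -> z = x \/ z = y)).
Definition fupair (i j k : nat) : form :=
  FAnd (FIn i k) (FAnd (FIn j k) (FAll (FImp (FIn 0 (S k)) (FOr (FEq 0 (S i)) (FEq 0 (S j)))))).
Definition opair0 {M : Type} (mem : M -> M -> Prop) (x y p : M) : Prop :=
  exists u, mem u p /\ exists v, mem v p /\
    (upair0 mem x x u /\ (upair0 mem x y v /\ upair0 mem u v p)).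
Definition fopair (i j k : nat) : form :=
  FEx (FAnd (FIn 0 (S k)) (FEx (FAnd (FIn 0 (S (S k)))
    (FAnd (fupair (S (S i)) (S (S i)) 1) (FAnd (fupair (S (S i)) (S (S j)) 0) (fupair 1 0 (S (S k)))))))).

Lemma sat_fopair {M : Type} (mem : M -> M -> Prop) e i j k :
  sat mem e (fopair i j k) <-> opair0 mem (e i) (e j) (e k).
Proof. reflexivity. Qed.

Lemma D0_fupair i j k : Delta0 (fupair i j k).
Proof. unfold fupair; repeat (constructor || discriminate). Qed.
Lemma D0_fopair i j k : Delta0 (fopair i j k).
Proof. unfold fopair; repeat (apply D0_fupair || constructor || discriminate). Qed.

Ltac d0 := repeat (apply D0_fopair || apply D0_fupair || constructor || discriminate).

Lemma upair0_iff {M : Type} (mem : M -> M -> Prop) x y u :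
  upair0 mem x y u <-> is_upair mem x y u.
Proof.
  unfold upair0, is_upair; split.
  - intros [Hx [Hy Hz]] z; split; [apply Hz|]. intros [->| ->]; auto.
  - intros H; repeat split; try (apply H; auto).
Qed.

Lemma opair0_iff {M : Type} (mem : M -> M -> Prop) x y p :
  opair0 mem x y p <-> is_opair mem x y p.
Proof.
  unfold opair0, is_opair; split.
  - intros [u [_ [v [_ [H1 [H2 H3]]]]]]. exists u, v.
    split; [|split]; apply upair0_iff; auto.
  - intros [u [v [H1 [H2 H3]]]]. apply upair0_iff in H1, H2, H3.
    exists u; split; [apply H3|]. exists v; split; [apply H3|]. auto.
Qed.

Lemma opair_mm {M : Type} (mem : M -> M -> Prop) x y p w t :
  is_opair mem x y p -> mem w p -> mem t w -> t = x \/ t = y.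
Proof.
  intros [u [v [H1 [H2 H3]]]] Hw Ht.
  destruct (proj1 (H3 w) Hw) as [-> | ->].
  - left. destruct (proj1 (H1 t) Ht); auto.
  - apply H2; auto.
Qed.

Lemma opair_x {M : Type} (mem : M -> M -> Prop) x y p :
  is_opair mem x y p -> exists u, mem u p /\ mem x u.
Proof. intros [u [v [H1 [H2 H3]]]]. exists u; split; [apply H3|apply H1]; auto. Qed.
Lemma opair_y {M : Type} (mem : M -> M -> Prop) x y p :
  is_opair mem x y p -> exists v, mem v p /\ mem y v.
Proof. intros [u [v [H1 [H2 H3]]]]. exists v; split; [apply H3|apply H2]; auto. Qed.

Arguments opair_x {M mem x y p}.
Arguments opair_y {M mem x y p}.
Arguments opair_mm {M mem x y p w t}.

Lemma opair_inj {M : Type} (mem : M -> M -> Prop) x y x' y' p :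
  is_opair mem x y p -> is_opair mem x' y' p -> x = x' /\ y = y'.
Proof.
  intros H H'.
  assert (Ex : x' = x).
  { pose proof H as HH. destruct HH as [u [v [H1 [H2 H3]]]].
    destruct H' as [u' [v' [H1' [H2' H3']]]].
    assert (Hu' : mem u' p) by (apply H3'; auto).
    destruct (proj1 (H3 u') Hu') as [E|E]; subst u'.
    - destruct (proj1 (H1 x') (proj2 (H1' x') (or_introl eq_refl))); auto.
    - assert (Hxv : mem x v) by (apply H2; auto).
      destruct (proj1 (H1' x) Hxv); auto. }
  subst x'. split; [reflexivity|].
  destruct (opair_y H) as [v [Hv Hy]].
  destruct (opair_y H') as [v' [Hv' Hy']].
  destruct (opair_mm H' Hv Hy) as [E1|E1]; [|auto].
  destruct (opair_mm H Hv' Hy') as [E2|E2]; congruence.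
Qed.
Arguments opair_inj {M mem x y x' y' p}.

Definition funD0 {M : Type} (mem : M -> M -> Prop) (f a b : M) : Prop :=
  (forall p, mem p f -> exists x, mem x a /\ exists y, mem y b /\ opair0 mem x y p) /\
  ((forall x, mem x a -> exists p, mem p f /\ exists v, mem v p /\ exists y, mem y v /\ opair0 mem x y p) /\
  (forall p, mem p f -> forall p', mem p' f -> forall u, mem u p -> forall x, mem x u ->
     forall v, mem v p -> forall y, mem y v -> forall v', mem v' p' -> forall y', mem y' v' ->
     opair0 mem x y p -> opair0 mem x y' p' -> y = y')).

Definition ffun : form :=
  FAnd (FAll (FImp (FIn 0 1) (FEx (FAnd (FIn 0 3) (FEx (FAnd (FIn 0 5) (fopair 1 0 2)))))))
  (FAnd (FAll (FImp (FIn 0 2) (FEx (FAnd (FIn 0 2) (FEx (FAnd (FIn 0 1) (FEx (FAnd (FIn 0 1) (fopair 3 0 2)))))))))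
   (FAll (FImp (FIn 0 1) (FAll (FImp (FIn 0 2) (FAll (FImp (FIn 0 2) (FAll (FImp (FIn 0 1)
     (FAll (FImp (FIn 0 4) (FAll (FImp (FIn 0 1) (FAll (FImp (FIn 0 5) (FAll (FImp (FIn 0 1)
       (FImp (fopair 4 2 7) (FImp (fopair 4 0 6) (FEq 2 0)))))))))))))))))))).

Lemma D0_ffun : Delta0 ffun.
Proof. unfold ffun; d0. Qed.

Lemma sat_ffun {M : Type} (mem : M -> M -> Prop) f a b e :
  sat mem (scons f (scons a (scons b e))) ffun <-> funD0 mem f a b.
Proof. reflexivity. Qed.

Lemma funD0_iff {M : Type} (mem : M -> M -> Prop) f a b :
  funD0 mem f a b <-> is_function mem f a b.
Proof.
  split.
  - intros [F1 [F2 F3]]. split; [|split].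
    + intros p Hp. destruct (F1 p Hp) as [x [Hx [y [Hy Ho]]]].
      exists x, y; repeat split; auto. apply opair0_iff; auto.
    + intros x Hx. destruct (F2 x Hx) as [p [Hp [v [Hv [y [Hy Ho]]]]]].
      exists y, p; split; auto; apply opair0_iff; auto.
    + intros x y y' p p' Hp Hp' Ho Ho'.
      destruct (opair_x Ho) as [u [Hu Hxu]].
      destruct (opair_y Ho) as [v [Hv Hyv]].
      destruct (opair_y Ho') as [v' [Hv' Hyv']].
      apply (F3 p Hp p' Hp' u Hu x Hxu v Hv y Hyv v' Hv' y' Hyv'); apply opair0_iff; auto.
  - intros [F1 [F2 F3]]. split; [|split].
    + intros p Hp. destruct (F1 p Hp) as [x [y [Hx [Hy Ho]]]].
      exists x; split; auto; exists y; split; auto; apply opair0_iff; auto.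
    + intros x Hx. destruct (F2 x Hx) as [y [p [Hp Ho]]].
      destruct (opair_y Ho) as [v [Hv Hyv]].
      exists p; split; auto; exists v; split; auto; exists y; split; auto; apply opair0_iff; auto.
    + intros p Hp p' Hp' u Hu x Hx v Hv y Hy v' Hv' y' Hy' Ho Ho'.
      apply (F3 x y y' p p' Hp Hp'); apply opair0_iff; auto.
Qed.

Definition Sind {M : Type} (mem : M -> M -> Prop) (alpha x : M) : Prop :=
  forall eps, mem eps alpha -> subset mem eps x -> relpl mem alpha eps.

Definition fSind : form :=
  FAll (FImp (FIn 0 2) (FImp (FAll (FImp (FIn 0 1) (FIn 0 2)))
    (FAll (FImp (FIn 0 1) (FAll (FImp (FIn 0 4) (FImp (FAll (FImp (FIn 0 1) (FIn 0 2))) (FIn 0 2)))))))).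

Lemma plord_relpl {M : Type} (mem : M -> M -> Prop) (H : IKP mem) alpha :
  PlOrd mem alpha -> forall eps, mem eps alpha -> relpl mem alpha eps.
Proof.
  intros [[Htr Hel] Hpl].
  assert (Hall : forall x, Sind mem alpha x).
  { intros x.
    exact (ikp_ind H fSind (fun _ => alpha)
      (fun x (IH : forall y, mem y x -> Sind mem alpha y) =>
         (fun eps Heps Hsub d Hd e' He' Hsd =>
            proj2 (Hpl d (Htr eps Heps d Hd) e' Hsd (IH d (Hsub d Hd) e' He' Hsd)) eps Heps Hd)
         : Sind mem alpha x) x). }
  intros eps Heps. apply (Hall eps eps Heps). intros z Hz; exact Hz.
Qed.

Definition frelpl : form :=
  FAll (FImp (FIn 0 1) (FAll (FImp (FIn 0 3) (FImp (FAll (FImp (FIn 0 1) (FIn 0 2))) (FIn 0 2))))).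

Lemma pow_plub {M : Type} (mem : M -> M -> Prop) (H : IKP mem) :
  Powerset mem -> PlUb mem.
Proof.
  intros HP alpha Ha.
  pose proof (plord_relpl mem H alpha Ha) as Rel.
  destruct Ha as [[Htr Hel] Hpl].
  destruct (HP alpha) as [P HPa].
  assert (D : Delta0 frelpl) by (unfold frelpl; d0).
  destruct (ikp_sep H D (fun _ => alpha) P) as [beta Hb].
  change (forall x, mem x beta <-> mem x P /\ relpl mem alpha x) in Hb.
  assert (Hb' : forall g, mem g beta <-> subset mem g alpha /\ relpl mem alpha g).
  { intros g; rewrite Hb, HPa; tauto. }
  clear Hb.
  exists beta; split.
  - split; [split|].
    + intros y Hy z Hz. apply Hb' in Hy as [Hy1 Hy2].
      apply Hb'; split.
      * apply Htr; auto.
      * apply Rel; auto.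
    + intros y Hy w Hw t Ht. apply Hb' in Hy as [Hy1 Hy2].
      assert (Hwa : mem w alpha) by auto.
      apply (Hy2 w Hw t).
      * apply (Htr w Hwa t Ht).
      * apply (Hel w Hwa t Ht).
    + intros b Hbb g Hgb Hrg.
      apply Hb' in Hbb as [Hb1 Hb2].
      assert (Hra : relpl mem alpha g).
      { intros d Hd e He Hed. apply (Hrg d Hd e); auto.
        apply Hb'; split; [apply Htr; auto | apply Rel; auto]. }
      split.
      * apply Hb'; split; auto. intros z Hz; auto.
      * intros d Hd Hbd. apply Hb' in Hd as [Hd1 Hd2].
        assert (Hba : mem b alpha) by auto.
        destruct (Hpl b Hba g Hgb Hra) as [Hga _].
        apply (Hd2 b Hbd g Hga Hgb).
  - apply Hb'; split.
    + intros z Hz; auto.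
    + intros d Hd e He _; auto.
Qed.

Lemma pow_exp {M : Type} (mem : M -> M -> Prop) (H : IKP mem) :
  Powerset mem -> Exponentiation mem.
Proof.
  intros HP a b.
  destruct (ikp_pair H a b) as [ab Hab].
  destruct (ikp_union H ab) as [U HU].
  assert (HU' : forall z, mem z a \/ mem z b -> mem z U).
  { intros z Hz; apply HU. destruct Hz as [Hz|Hz]; [exists a|exists b]; split; auto; apply Hab; auto. }
  destruct (HP U) as [P1 H1].
  destruct (HP P1) as [P2 H2].
  destruct (HP P2) as [P3 H3].
  destruct (ikp_sep H D0_ffun (scons a (scons b (fun _ => a))) P3) as [C HC].
  exists C. intros f. rewrite HC.
  change (mem f P3 /\ funD0 mem f a b <-> is_function mem f a b).
  rewrite funD0_iff. split; [tauto|].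
  intros Hf; split; auto.
  apply H3. intros p Hp. apply H2. intros w Hw. apply H1. intros t Ht.
  destruct (proj1 Hf p Hp) as [x [y [Hx [Hy Ho]]]].
  apply HU'. destruct (opair_mm Ho Hw Ht) as [->| ->]; auto.
Qed.

Definition psi0 {M : Type} (mem : M -> M -> Prop) (e0 z f : M) : Prop :=
  exists p, mem p f /\ exists v, mem v p /\ exists w, mem w v /\ (opair0 mem z w p /\ mem e0 w).
Definition fpsi zi fi ei : form :=
  FEx (FAnd (FIn 0 (S fi)) (FEx (FAnd (FIn 0 1) (FEx (FAnd (FIn 0 1)
    (FAnd (fopair (3+zi) 0 2) (FIn (3+ei) 0))))))).
Definition chiY {M : Type} (mem : M -> M -> Prop) (a e0 y f : M) : Prop :=
  (forall z, mem z y -> mem z a /\ psi0 mem e0 z f) /\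
  (forall z, mem z a -> psi0 mem e0 z f -> mem z y).
Definition fchiY : form :=
  FAnd (FAll (FImp (FIn 0 1) (FAnd (FIn 0 3) (fpsi 0 2 4))))
       (FAll (FImp (FIn 0 3) (FImp (fpsi 0 2 4) (FIn 0 1)))).
Definition chiP {M : Type} (mem : M -> M -> Prop) (x e0 p z : M) : Prop :=
  exists v, mem v p /\ exists w, mem w v /\
    (opair0 mem z w p /\ ((forall t, mem t w -> t = e0 /\ mem z x) /\ (mem z x -> mem e0 w))).
Definition fchi pi zi xi ei : form :=
  FEx (FAnd (FIn 0 (S pi)) (FEx (FAnd (FIn 0 1) (FAnd (fopair (2+zi) 0 (2+pi))
    (FAnd (FAll (FImp (FIn 0 1) (FAnd (FEq 0 (3+ei)) (FIn (3+zi) (3+xi)))))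
          (FImp (FIn (2+zi) (2+xi)) (FIn (2+ei) 0))))))).

Lemma D0_fpsi zi fi ei : Delta0 (fpsi zi fi ei).
Proof. unfold fpsi; d0. Qed.
Lemma D0_fchi pi zi xi ei : Delta0 (fchi pi zi xi ei).
Proof. unfold fchi; d0. Qed.
Lemma D0_fchiY : Delta0 fchiY.
Proof. unfold fchiY; repeat (apply D0_fpsi || constructor || discriminate). Qed.

Lemma plub_exp_pow {M : Type} (mem : M -> M -> Prop) (H : IKP mem) :
  PlUb mem -> Exponentiation mem -> Powerset mem.
Proof.
  intros HPl HE a.
  destruct (ikp_strong_inf H) as [om [[[e0 [He0 _]] _] _]].
  assert (Pe0 : PlOrd mem e0).
  { split; [split|]; [intros y Hy; destruct (He0 y Hy)|intros y Hy; destruct (He0 y Hy)|].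
    intros b Hb; destruct (He0 b Hb). }
  destruct (HPl e0 Pe0) as [b1 [Pb1 He0b1]].
  destruct (HPl b1 Pb1) as [b2 [Pb2 Hb1b2]].
  assert (Key : forall g, (forall z, mem z g -> z = e0) -> mem g b2).
  { intros g Hg. destruct Pb2 as [_ Hpl].
    refine (proj1 (Hpl b1 Hb1b2 g _ _)).
    - intros z Hz. rewrite (Hg z Hz); auto.
    - intros d Hd e He Hed. assert (E : e = e0).
      { apply (ikp_ext H). intros z; split; intros Hz.
        - rewrite (Hg d Hd) in Hed. destruct (He0 z (Hed z Hz)).
        - destruct (He0 z Hz). }
      rewrite E, <- (Hg d Hd); auto. }
  destruct (HE a b2) as [F HF].
  assert (Hex : forall f, mem f F -> exists y, chiY mem a e0 y f).
  { intros f Hf.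
    destruct (ikp_sep H (D0_fpsi 0 1 3) (scons f (scons a (scons e0 (fun _ => a)))) a) as [y Hy].
    change (forall z, mem z y <-> mem z a /\ psi0 mem e0 z f) in Hy.
    exists y; split.
    - intros z Hz; apply Hy; auto.
    - intros z Hz Hp; apply Hy; auto. }
  destruct (ikp_coll H D0_fchiY (scons a (scons e0 (fun _ => a))) F Hex) as [B HB].
  change (forall f, mem f F -> exists y, mem y B /\ chiY mem a e0 y f) in HB.
  assert (Dsub : Delta0 (FAll (FImp (FIn 0 1) (FIn 0 2)))) by d0.
  destruct (ikp_sep H Dsub (scons a (fun _ => a)) B) as [C HC].
  change (forall y, mem y C <-> mem y B /\ subset mem y a) in HC.
  exists C. intros x. rewrite HC. split; [tauto|]. intros Hxa. split; auto.
  destruct (ikp_pair H e0 e0) as [s1 Hs1].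
  assert (Hexp : forall z, mem z a -> exists p, chiP mem x e0 p z).
  { intros z Hz.
    assert (Dz : Delta0 (FIn 1 2)) by constructor.
    destruct (ikp_sep H Dz (scons z (scons x (fun _ => x))) s1) as [w Hw].
    change (forall t, mem t w <-> mem t s1 /\ mem z x) in Hw.
    destruct (ikp_pair H z z) as [u Hu].
    destruct (ikp_pair H z w) as [v Hv].
    destruct (ikp_pair H u v) as [p Hp].
    exists p, v; split; [apply Hp; auto|]. exists w; split; [apply Hv; auto|].
    split; [|split].
    - apply opair0_iff. exists u, v; auto.
    - intros t Ht. apply Hw in Ht as [Ht1 Ht2]. split; auto.
      destruct (proj1 (Hs1 t) Ht1); auto.
    - intros Hzx. apply Hw; split; auto. apply Hs1; auto. }
  destruct (ikp_coll H (D0_fchi 0 1 2 3) (scons x (scons e0 (fun _ => x))) a Hexp) as [D HD].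
  change (forall z, mem z a -> exists p, mem p D /\ chiP mem x e0 p z) in HD.
  assert (Dfx : Delta0 (FEx (FAnd (FIn 0 2) (fchi 1 0 3 4)))) by (apply D0BEx; [discriminate|apply D0_fchi]).
  destruct (ikp_sep H Dfx (scons a (scons x (scons e0 (fun _ => a)))) D) as [fx Hfx].
  change (forall p, mem p fx <-> mem p D /\ exists z, mem z a /\ chiP mem x e0 p z) in Hfx.
  assert (Cop : forall p z z' w, chiP mem x e0 p z -> is_opair mem z' w p ->
     z' = z /\ (forall t, mem t w -> t = e0 /\ mem z x) /\ (mem z x -> mem e0 w)).
  { intros p z z' w [v [Hv [w1 [Hw1 [Ho [W1 W2]]]]]] Ho'.
    apply opair0_iff in Ho. destruct (opair_inj Ho Ho') as [E1 E2]. subst. auto. }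
  assert (Ffx : mem fx F).
  { apply HF. split; [|split].
    - intros p Hp. apply Hfx in Hp as [_ [z [Hz Hc]]].
      destruct Hc as [v [Hv [w [Hw [Ho [W1 W2]]]]]].
      exists z, w; repeat split; auto.
      + apply Key. intros t Ht; apply W1; auto.
      + apply opair0_iff; auto.
    - intros z Hz. destruct (HD z Hz) as [p [Hp Hc]].
      pose proof Hc as Hc'.
      destruct Hc as [v [Hv [w [Hw [Ho [W1 W2]]]]]].
      exists w, p; split; [apply Hfx; split; eauto|apply opair0_iff; auto].
    - intros z y y' p p' Hp Hp' Ho Ho'.
      apply Hfx in Hp as [_ [z1 [_ Hc1]]]. apply Hfx in Hp' as [_ [z2 [_ Hc2]]].
      destruct (Cop _ _ _ _ Hc1 Ho) as [E1 [A1 B1]].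
      destruct (Cop _ _ _ _ Hc2 Ho') as [E2 [A2 B2]]. subst z1 z2.
      apply (ikp_ext H). intros t; split; intros Ht.
      + destruct (A1 t Ht) as [-> Hzx]. auto.
      + destruct (A2 t Ht) as [-> Hzx]. auto. }
  destruct (HB fx Ffx) as [y [Hy [Y1 Y2]]].
  replace x with y; auto.
  apply (ikp_ext H). intros z; split; intros Hz.
  - destruct (Y1 z Hz) as [Hza [p [Hp [v [Hv [w [Hw [Ho Hew]]]]]]]].
    apply Hfx in Hp as [_ [z1 [_ Hc1]]].
    apply opair0_iff in Ho.
    destruct (Cop _ _ _ _ Hc1 Ho) as [E1 [A1 B1]]. subst z1.
    apply (A1 e0 Hew).
  - apply Y2; auto.
    destruct (HD z (Hxa z Hz)) as [p [Hp Hc]].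
    pose proof Hc as Hc'.
    destruct Hc as [v [Hv [w [Hw [Ho [W1 W2]]]]]].
    exists p; split; [apply Hfx; split; eauto|].
    exists v; split; auto. exists w; split; auto.
Qed.

Theorem lemma3p4 : forall (M : Type) (mem : M -> M -> Prop),
  IKP mem -> ((PlUb mem /\ Exponentiation mem) <-> Powerset mem).
Proof.
  intros M mem H; split.
  - intros [HP HE]; apply plub_exp_pow; auto.
  - intros HP; split; [apply pow_plub | apply pow_exp]; auto.
Qed.
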